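(* Let $[0,1]$ be the closed real unit interval, regarded as a complete lattice with $\sup$ and $\inf$, and let $\mathbf L=[0,1]\times\{0,1\}$ be the product lattice (componentwise order, $0<1$). Then every element of $\mathbf L$ is a non-generator, except for $(0,1)$ and $(1,0)$. Hence the set $\Gamma$ of non-generators of $\mathbf L$ is not a complete sublattice, and the complete sublattice generated by $\Gamma$ is all of $L$.
   Context: A complete sublattice of a complete lattice $\mathbf L$ is a subset $T\subseteq L$ closed under arbitrary meets and joins computed in $L$, including those of the empty set (so $T$ contains the minimum and maximum of $L$). For $X\subseteq L$, $\langle X\rangle$ is the intersection of all complete sublattices containing $X$, and $\langle X,a\rangle=\langle X\cup\{a\}\rangle$. An element $a$ is a non-generator if for every $X\subseteq L$, $\langle X,a\rangle=L$ implies $\langle X\rangle=L$. *)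

(* Defs.v *)
From HB Require Import structures.
From mathcomp Require Import all_boot all_order all_algebra.
From mathcomp Require Import boolp classical_sets reals.
Set Implicit Arguments. Unset Strict Implicit. Unset Printing Implicit Defensive.
Import Order.TTheory GRing.Theory Num.Theory.
Local Open Scope ring_scope.
Local Open Scope classical_set_scope.

Section LatticeDefs.
Variable R : realType.

(* The carrier L = [0,1] x {0,1}, with {0,1} encoded as bool (false < true). *)
Definition Lcar : set (R * bool) := [set p | 0 <= p.1 <= 1].

Definition Lle (p q : R * bool) : Prop := p.1 <= q.1 /\ (p.2 ==> q.2).

Definition is_join (S : set (R * bool)) (x : R * bool) : Prop :=
  Lcar x /\ (forall y, S y -> Lle y x) /\
  (forall z, Lcar z -> (forall y, S y -> Lle y z) -> Lle x z).

Definition is_meet (S : set (R * bool)) (x : R * bool) : Prop :=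
  Lcar x /\ (forall y, S y -> Lle x y) /\
  (forall z, Lcar z -> (forall y, S y -> Lle z y) -> Lle z x).

Definition complete_sublattice (T : set (R * bool)) : Prop :=
  T `<=` Lcar /\
  (forall S x, S `<=` T -> is_join S x -> T x) /\
  (forall S x, S `<=` T -> is_meet S x -> T x).

Definition generated (X : set (R * bool)) : set (R * bool) :=
  [set p | forall T, complete_sublattice T -> X `<=` T -> T p].

Definition non_generator (a : R * bool) : Prop :=
  forall X, X `<=` Lcar -> generated (X `|` [set a]) = Lcar -> generated X = Lcar.

Definition Gamma : set (R * bool) := [set a | Lcar a /\ non_generator a].

End LatticeDefs.

(* Main.v *)
Require Import Defs.
From HB Require Import structures.
From mathcomp Require Import all_boot all_order all_algebra.
From mathcomp Require Import boolp classical_sets reals.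
From mathcomp Require Import lra.
Import Order.TTheory GRing.Theory Num.Theory.
Local Open Scope ring_scope.
Local Open Scope classical_set_scope.

Set Implicit Arguments. Unset Strict Implicit.
Section Proof.
Variable R : realType.
Implicit Types (S T X : set (R * bool)) (x y z : R * bool).

Lemma join_snd S x : is_join S x -> x.2 -> exists y, S y /\ y.2.
Proof.
move=> [Lx [ub lub]] x2; apply: contrapT => H.
have [_] : Lle x (x.1, false).
  apply: lub => // y Sy; have [le _] := ub y Sy; split => //.
  by case: (boolP y.2) => // y2; exfalso; apply: H; exists y.
by rewrite x2.
Qed.

Lemma join_le S x r : is_join S x -> 0 <= r <= 1 ->
  (forall y, S y -> y.1 <= r) -> x.1 <= r.
Proof.
move=> [Lx [ub lub]] r01 H.
have [] := lub (r, true) r01; last by [].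
by move=> y Sy; split => //=; [exact: H | case: y.2].
Qed.

Lemma meet_snd S x : is_meet S x -> ~~ x.2 -> exists y, S y /\ ~~ y.2.
Proof.
move=> [Lx [lb glb]] x2; apply: contrapT => H.
have [_] : Lle (x.1, true) x.
  apply: glb => // y Sy; have [le _] := lb y Sy; split => //=.
  by case: (boolP y.2) => // y2; exfalso; apply: H; exists y.
by rewrite (negbTE x2).
Qed.

Lemma meet_ge S x r : is_meet S x -> 0 <= r <= 1 ->
  (forall y, S y -> r <= y.1) -> r <= x.1.
Proof.
move=> [Lx [lb glb]] r01 H.
have [] := glb (r, false) r01; last by [].
by move=> y Sy; split => //=; exact: H.
Qed.

Lemma Lcar_cs : complete_sublattice (@Lcar R).
Proof. by split => //; split => S x _ []. Qed.

Lemma gen_sub X : X `<=` @Lcar R -> generated X `<=` @Lcar R.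
Proof. by move=> XL p; apply; [exact: Lcar_cs|]. Qed.

Lemma gen_ext X : X `<=` generated X.
Proof. by move=> p Xp T _; apply. Qed.

Lemma gen_cs X : X `<=` @Lcar R -> complete_sublattice (generated X).
Proof.
move=> XL; split; first exact: gen_sub.
split.
- move=> S x SX jx T [TL [TJ TM]] XT; apply: (TJ S) => // y Sy.
  exact: SX y Sy T (conj TL (conj TJ TM)) XT.
- move=> S x SX jx T [TL [TJ TM]] XT; apply: (TM S) => // y Sy.
  exact: SX y Sy T (conj TL (conj TJ TM)) XT.
Qed.

Lemma gen_min X T : complete_sublattice T -> X `<=` T -> generated X `<=` T.
Proof. by move=> cT XT p; apply. Qed.

Definition U1 (m : R) := [set p : R * bool | Lcar p /\ (p.2 -> m <= p.1)].
Definition U2 (n : R) := [set p : R * bool | Lcar p /\ (~~ p.2 -> p.1 <= n)].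
Definition U3 (u v : R) := [set p : R * bool | Lcar p /\ (p.1 <= u \/ v <= p.1)].

Lemma U1_cs m : 0 <= m <= 1 -> complete_sublattice (U1 m).
Proof.
move=> m01; split; first by move=> p [].
split.
- move=> S x SU jx; split; first by case: jx.
  move=> x2; have [y [Sy y2]] := join_snd jx x2.
  have [_ [ub _]] := jx; have [le _] := ub y Sy.
  have [_ /(_ y2)] := SU y Sy; move=> my; exact: le_trans my le.
- move=> S x SU mx; split; first by case: mx.
  move=> x2; apply: (meet_ge mx m01) => y Sy.
  have [_ [lb _]] := mx; have [_ ] := lb y Sy; rewrite x2 /= => y2.
  by have [_ /(_ y2)] := SU y Sy.
Qed.

Lemma U2_cs n : 0 <= n <= 1 -> complete_sublattice (U2 n).
Proof.
move=> n01; split; first by move=> p [].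
split.
- move=> S x SU jx; split; first by case: jx.
  move=> x2; apply: (join_le jx n01) => y Sy.
  have [_ [ub _]] := jx; have [_ ] := ub y Sy.
  rewrite (negbTE x2) implybF => y2.
  by have [_ /(_ y2)] := SU y Sy.
- move=> S x SU mx; split; first by case: mx.
  move=> x2; have [y [Sy y2]] := meet_snd mx x2.
  have [_ [lb _]] := mx; have [le _] := lb y Sy.
  have [_ /(_ y2)] := SU y Sy; move=> yn; exact: le_trans le yn.
Qed.

Lemma U3_cs u v : 0 <= u <= 1 -> 0 <= v <= 1 -> complete_sublattice (U3 u v).
Proof.
move=> u01 v01; split; first by move=> p [].
split.
- move=> S x SU jx; split; first by case: jx.
  have [[y [Sy vy]]|H] := pselect (exists y, S y /\ v <= y.1).
    right; have [_ [ub _]] := jx; have [le _] := ub y Sy; exact: le_trans vy le.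
  left; apply: (join_le jx u01) => y Sy.
  have [_ [//|vy]] := SU y Sy.
  by exfalso; apply: H; exists y.
- move=> S x SU mx; split; first by case: mx.
  have [[y [Sy yu]]|H] := pselect (exists y, S y /\ y.1 <= u).
    left; have [_ [lb _]] := mx; have [le _] := lb y Sy; exact: le_trans le yu.
  right; apply: (meet_ge mx v01) => y Sy.
  have [_ [yu|//]] := SU y Sy.
  by exfalso; apply: H; exists y.
Qed.

Lemma join_pair (r : R) : 0 <= r <= 1 ->
  is_join [set y | y = (r, false) \/ y = (0, true)] (r, true).
Proof.
move=> r01; split => //; split.
  move=> y [->|->]; split => //=; by case/andP: r01.
move=> z Lz H; have [le _] := H _ (or_introl erefl).
have [_ ] := H _ (or_intror erefl); by [].
Qed.

Lemma meet_pair (r : R) : 0 <= r <= 1 ->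
  is_meet [set y | y = (r, true) \/ y = (1, false)] (r, false).
Proof.
move=> r01; split => //; split.
  move=> y [->|->]; split => //=; by case/andP: r01.
move=> z Lz H; have [le _] := H _ (or_introl erefl).
have [_ ] := H _ (or_intror erefl); by [].
Qed.

Lemma join0 T : complete_sublattice T -> T (0, false).
Proof.
move=> [_ [TJ _]]; apply: (TJ set0) => //.
split; first by rewrite /Lcar /= lexx ler01.
split => // z Lz _; split => //=; by case/andP: Lz.
Qed.

Lemma meet0 T : complete_sublattice T -> T (1, true).
Proof.
move=> [_ [_ TM]]; apply: (TM set0) => //.
split; first by rewrite /Lcar /= lexx ler01.
split => // z Lz _; split => //=; [by case/andP: Lz | by case: z.2].
Qed.


Lemma inf_mem T d : complete_sublattice T -> 0 <= d <= 1 ->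
  let m := inf [set r | exists y, T y /\ y.2 /\ d <= y.1 /\ y.1 = r] in
  T (m, true) /\ (forall y, T y -> y.2 -> d <= y.1 -> m <= y.1) /\ d <= m.
Proof.
move=> cT /andP[d0 d1] m.
set E := [set r | exists y, T y /\ y.2 /\ d <= y.1 /\ y.1 = r].
have TL : T `<=` @Lcar R by case: cT.
have E1 : E 1 by exists (1, true); split; [exact: meet0|].
have lbd : lbound E d by move=> r [y [_ [_ [dy <-]]]].
have hl : has_lbound E by exists d.
have mlb := ge_inf hl.
have dm : d <= m by apply: lb_le_inf; [exists 1|].
have m1 : m <= 1 by exact: mlb.
have Tm : T (m, true).
  case: cT => [_ [_ TM]].
  apply: (TM [set y | T y /\ y.2 /\ d <= y.1]); first by move=> y [].
  split; first by rewrite /Lcar /= m1 (le_trans d0 dm).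
  split.
    move=> y [Ty [y2 dy]]; split => /=; last by rewrite y2.
    by apply: mlb; exists y.
  move=> z Lz H; split => /=; last by case: z.2.
  apply: lb_le_inf; first by exists 1.
  by move=> r [y [Ty [y2 [dy <-]]]]; have [] := H y (conj Ty (conj y2 dy)).
split => //; split => // y Ty y2 dy; apply: mlb; by exists y.
Qed.

Lemma sup_mem T d : complete_sublattice T -> 0 <= d <= 1 ->
  let p := sup [set r | exists y, T y /\ ~~ y.2 /\ y.1 <= d /\ y.1 = r] in
  T (p, false) /\ (forall y, T y -> ~~ y.2 -> y.1 <= d -> y.1 <= p) /\ p <= d.
Proof.
move=> cT /andP[d0 d1] p.
set E := [set r | exists y, T y /\ ~~ y.2 /\ y.1 <= d /\ y.1 = r].
have TL : T `<=` @Lcar R by case: cT.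
have E0 : E 0 by exists (0, false); split; [exact: join0|].
have ubd : ubound E d by move=> r [y [_ [_ [dy <-]]]].
have hu : has_ubound E by exists d.
have pub := ub_le_sup hu.
have pd : p <= d by apply: ge_sup; [exists 0|].
have p0 : 0 <= p by exact: pub.
have Tp : T (p, false).
  case: cT => [_ [TJ _]].
  apply: (TJ [set y | T y /\ ~~ y.2 /\ y.1 <= d]); first by move=> y [].
  split; first by rewrite /Lcar /= p0 (le_trans pd d1).
  split.
    move=> y [Ty [y2 dy]]; split => /=; last by rewrite (negbTE y2).
    by apply: pub; exists y.
  move=> z Lz H; split => //=.
  apply: ge_sup; first by exists 0.
  by move=> r [y [Ty [y2 [dy <-]]]]; have [] := H y (conj Ty (conj y2 dy)).
split => //; split => // y Ty y2 dy; apply: pub; by exists y.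
Qed.


Lemma mid_lt (u v : R) : u < v -> u < (u + v) / 2 /\ (u + v) / 2 < v.
Proof. move=> uv; split; lra. Qed.

Lemma key T a : complete_sublattice T -> T <> @Lcar R -> Lcar a ->
  a <> (0, true) -> a <> (1, false) ->
  exists U, complete_sublattice U /\ T `<=` U /\ U a /\
    exists w, Lcar w /\ ~ U w.
Proof.
move=> cT NT La a01 a10.
have TL : T `<=` @Lcar R by case: cT.
move: a La a01 a10 => [c b] /= /andP[c0 c1] a01 a10.
simpl in c0, c1.
have [T01|nT01] := pselect (T (0, true)); last first.
  have := @inf_mem T 0 cT; rewrite lexx ler01 => /(_ isT) /=.
  set m := inf _ => -[Tm [mlb m0]].
  have m1 : m <= 1 by apply: (mlb (1, true)); [exact: meet0|done|exact: ler01].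
  have mpos : 0 < m.
    rewrite lt_def m0 andbT; apply/eqP => m00; apply: nT01; by rewrite -m00.
  have cpos : b -> 0 < c.
    move=> bt; rewrite lt_def c0 andbT; apply/eqP => c00; apply: a01.
    by rewrite c00 bt.
  pose m' := if b then Num.min m c else m.
  have m'pos : 0 < m' by rewrite /m'; case: ifP => // bt; rewrite lt_min mpos cpos.
  have m'm : m' <= m by rewrite /m'; case: ifP => // _; rewrite ge_min lexx.
  exists (U1 m'); split.
    apply: U1_cs; rewrite (ltW m'pos) /=; exact: le_trans m'm m1.
  split.
    move=> y Ty; split; first exact: TL.
    move=> y2; apply: le_trans m'm _; apply: mlb => //.
    by have /andP[] := TL y Ty.
  split.
    split; first by rewrite /Lcar /= c0 c1.
    by rewrite /m' /= => bt; rewrite bt ge_min lexx orbT.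
  exists (0, true); split; first by rewrite /Lcar /= lexx ler01.
  by move=> [_ /(_ isT)] /=; rewrite leNgt m'pos.
have [T10|nT10] := pselect (T (1, false)); last first.
  have := @sup_mem T 1 cT; rewrite lexx ler01 => /(_ isT) /=.
  set n := sup _ => -[Tn [nub n1]].
  have n0 : 0 <= n by apply: (nub (0, false)); [exact: join0|done|exact: ler01].
  have nlt : n < 1.
    rewrite lt_def n1 andbT; apply/eqP => n11; apply: nT10; by rewrite n11.
  have clt : ~~ b -> c < 1.
    move=> bt; rewrite lt_def c1 andbT; apply/eqP => c11; apply: a10.
    by rewrite c11 (negbTE bt).
  pose n' := if b then n else Num.max n c.
  have n'lt : n' < 1 by rewrite /n'; case: ifP => // /negbT bt; rewrite gt_max nlt clt.
  have nn' : n <= n' by rewrite /n'; case: ifP => // _; rewrite le_max lexx.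
  exists (U2 n'); split.
    apply: U2_cs; rewrite (ltW n'lt) andbT; exact: le_trans n0 nn'.
  split.
    move=> y Ty; split; first exact: TL.
    move=> y2; apply: le_trans nn'; apply: nub => //.
    by have /andP[] := TL y Ty.
  split.
    split; first by rewrite /Lcar /= c0 c1.
    by rewrite /n' /= => bt; rewrite (negbTE bt) le_max lexx orbT.
  exists (1, false); split; first by rewrite /Lcar /= lexx ler01.
  by move=> [_ /(_ isT)] /=; rewrite leNgt n'lt.
have swap : forall y, T y -> T (y.1, false) /\ T (y.1, true).
  move=> y Ty; have y01 := TL y Ty.
  have TJ : forall S x, S `<=` T -> is_join S x -> T x by case: cT => _ [].
  have TM : forall S x, S `<=` T -> is_meet S x -> T x by case: cT => _ [].
  move: y Ty y01 => [x []] Ty y01 /=.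
    split => //; apply: (TM _ _ _ (meet_pair y01)) => z [->|->] //.
  split => //; apply: (TJ _ _ _ (join_pair y01)) => z [->|->] //.
have [[d b0] [Lw nTw]] : exists w, Lcar w /\ ~ T w.
  apply: contrapT => H; apply: NT; apply/seteqP; split => // w Lw.
  by apply: contrapT => nw; apply: H; exists w.
have d01 : 0 <= d <= 1 by exact: Lw.
have nTd : forall y, T y -> y.1 <> d.
  move=> y Ty yd; apply: nTw; have [Tf Tt] := swap y Ty.
  by rewrite -yd; case: b0 {Lw}.
have := @sup_mem T d cT d01 => /=; set p := sup _ => -[Tp [pub pd]].
have := @inf_mem T d cT d01 => /=; set q := inf _ => -[Tq [qlb dq]].
have pd' : p < d by rewrite lt_def pd andbT; apply/eqP => pdd; exact: (nTd _ Tp (esym pdd)).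
have dq' : d < q by rewrite lt_def dq andbT; apply/eqP => qdd; exact: (nTd _ Tq qdd).
have p0 : 0 <= p by have /andP[] := TL _ Tp.
have q1 : q <= 1 by have /andP[] := TL _ Tq.
have gap : forall y, T y -> y.1 <= p \/ q <= y.1.
  move=> y Ty; have [Tf Tt] := swap y Ty.
  case: (ltgtP y.1 d) => yd.
  - by left; apply: (pub _ Tf) => //; exact: ltW.
  - by right; apply: (qlb _ Tt) => //; exact: ltW.
  - by exfalso; exact: (nTd _ Ty yd).
have [/andP[pc cq]|ncq] := boolP ((p < c) && (c < q)).
  exists (U3 p c); split.
    by apply: U3_cs; rewrite ?p0 ?c0 ?c1 //; lra.
  split.
    move=> y Ty; split; first exact: TL.
    by case: (gap y Ty) => H; [left|right; lra].
  split; first by split; [rewrite /Lcar /= c0 c1|right].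
  have [m1 m2] := mid_lt pc.
  exists ((p + c) / 2, false); split.
    by rewrite /Lcar /= (le_trans p0 (ltW m1)) (le_trans (ltW m2) c1).
  by move=> [_ /= [H|H]]; [move: m1; rewrite ltNge H | move: m2; rewrite ltNge H].
exists (U3 p q); split.
  by apply: U3_cs; apply/andP; split; lra.
split.
  by move=> y Ty; split; [exact: TL|exact: gap].
split.
  split; first by rewrite /Lcar /= c0 c1.
  move: ncq; rewrite negb_and -!leNgt => /orP[H|H]; [left|right]; exact: H.
have [m1 m2] := mid_lt (lt_trans pd' dq').
exists ((p + q) / 2, false); split.
  by rewrite /Lcar /= (le_trans p0 (ltW m1)) (le_trans (ltW m2) q1).
by move=> [_ /= [H|H]]; [move: m1; rewrite ltNge H | move: m2; rewrite ltNge H].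
Qed.

Lemma ng_back (a : R * bool) : Lcar a -> a <> (0, true) -> a <> (1, false) -> non_generator a.
Proof.
move=> La a01 a10 X XL HX; apply: contrapT => NT.
have [U [cU [TU [Ua [w [Lw nUw]]]]]] := key (gen_cs XL) NT La a01 a10.
apply: nUw.
have : generated (X `|` [set a]) `<=` U.
  apply: gen_min => // p [Xp| ->] //; apply: TU; exact: gen_ext.
by rewrite HX; apply.
Qed.

Lemma not_ng01 : ~ @non_generator R (0, true).
Proof.
have L01 : Lcar ((0 : R), true) by rewrite /Lcar /= lexx ler01.
have cX := @U1_cs 1; rewrite ler01 lexx in cX; have {}cX := cX isT.
have XL : U1 1 `<=` @Lcar R by move=> p [].
move=> /(_ (U1 1) XL) H.
have NX : generated (U1 1) <> @Lcar R.
  move=> E; have : generated (U1 1) (0, true) by rewrite E.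
  move=> /(_ _ cX (fun p h => h)) [_ /(_ isT)] /=.
  by rewrite leNgt ltr01.
apply: NX; apply: H; apply/seteqP; split.
  apply: gen_sub => p [[]//|->] //.
move=> [x bb] Lp T [TL [TJ TM]] XT.
have cT : complete_sublattice T by [].
case: bb Lp => Lp.
  apply: (TJ _ _ _ (join_pair Lp)) => z [->|->]; apply: XT; [left|by right].
  by split => //.
by apply: XT; left; split.
Qed.

Lemma not_ng10 : ~ @non_generator R (1, false).
Proof.
have L10 : Lcar ((1 : R), false) by rewrite /Lcar /= lexx ler01.
have cX := @U2_cs 0; rewrite ler01 lexx in cX; have {}cX := cX isT.
have XL : U2 0 `<=` @Lcar R by move=> p [].
move=> /(_ (U2 0) XL) H.
have NX : generated (U2 0) <> @Lcar R.
  move=> E; have : generated (U2 0) (1, false) by rewrite E.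
  move=> /(_ _ cX (fun p h => h)) [_ /(_ isT)] /=.
  by rewrite leNgt ltr01.
apply: NX; apply: H; apply/seteqP; split.
  apply: gen_sub => p [[]//|->] //.
move=> [x bb] Lp T [TL [TJ TM]] XT.
case: bb Lp => Lp.
  by apply: XT; left; split.
apply: (TM _ _ _ (meet_pair Lp)) => z [->|->]; apply: XT; [left|by right].
by split.
Qed.

Definition S1 := [set y : R * bool | Lcar y /\ y.2 = false /\ y.1 < 1].
Definition S0 := [set y : R * bool | Lcar y /\ y.2 = true /\ 0 < y.1].

Lemma join_S1 : is_join S1 (1, false).
Proof.
split; first by rewrite /Lcar /= lexx ler01.
split.
  move=> [x bb] [Ly [/= -> _]]; split => //; by case/andP: Ly.
move=> [z bz] Lz H; split => //=.
rewrite leNgt; apply/negP => z1.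
have [m1 m2] := mid_lt z1.
have z0 : 0 <= z by case/andP: Lz.
have [] := H ((z + 1) / 2, false).
  split; last by split.
  by rewrite /Lcar /= (le_trans z0 (ltW m1)) (ltW m2).
by rewrite /= leNgt m1.
Qed.

Lemma meet_S0 : is_meet S0 (0, true).
Proof.
split; first by rewrite /Lcar /= lexx ler01.
split.
  move=> [x bb] [Ly [/= -> _]]; split => //; by case/andP: Ly.
move=> [z bz] Lz H; split => /=; last by case: bz {H Lz}.
rewrite leNgt; apply/negP => z1.
have [m1 m2] := mid_lt z1.
have z0 : z <= 1 by case/andP: Lz.
have [] := H ((0 + z) / 2, true).
  split; last by split.
  by rewrite /Lcar /= (ltW m1) (le_trans (ltW m2) z0).
by rewrite /= leNgt m2.
Qed.

Lemma S1_Gamma : S1 `<=` @Gamma R.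
Proof.
move=> [x bb] [Ly [/= bf x1]]; split => //; apply: ng_back => // -[].
  by rewrite bf.
by move=> x11 _; move: x1; rewrite x11 ltxx.
Qed.

Lemma S0_Gamma : S0 `<=` @Gamma R.
Proof.
move=> [x bb] [Ly [/= bf x1]]; split => //; apply: ng_back => // -[].
  by move=> x11 _; move: x1; rewrite x11 ltxx.
by rewrite bf.
Qed.

End Proof.

Theorem proposition5 (R : realType) :
  (forall a : R * bool, Lcar a ->
     (non_generator a <-> (a <> (0, true) /\ a <> (1, false)))) /\
  ~ complete_sublattice (@Gamma R) /\
  generated (@Gamma R) = @Lcar R.
Proof.
split.
  move=> a La; split.
    move=> ng; split => E; subst a; [exact: not_ng01 ng|exact: not_ng10 ng].
  by move=> [h1 h2]; apply: ng_back.
have GL : @Gamma R `<=` @Lcar R by move=> p [].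
split.
  move=> [_ [TJ _]].
  have [_ ] := TJ _ _ (@S1_Gamma R) (@join_S1 R).
  exact: not_ng10.
apply/seteqP; split; first exact: gen_sub.
move=> p Lp T [TL [TJ TM]] GT.
have [->|n01] := pselect (p = (0, true)).
  apply: (TM _ _ _ (@meet_S0 R)) => y /S0_Gamma; exact: GT.
have [->|n10] := pselect (p = (1, false)).
  apply: (TJ _ _ _ (@join_S1 R)) => y /S1_Gamma; exact: GT.
apply: GT; split => //; exact: ng_back.
Qed.
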